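(* Let $G=(V,E)$ be a connected finite undirected graph without loops, with vertex set $V=\{1,\dots,n\}$, $n\ge 2$. Let $D$ be a self-adjoint $n\times n$ complex matrix compatible with $G$, i.e. $D_{ij}=D_{ji}=0$ whenever $i\neq j$ and $\{i,j\}\notin E$. For $v\in V$ let $\Delta(v)$ be the degree of $v$ in $G$ (the number of edges of $G$ incident to $v$), let $\Delta=\mathrm{diag}(\Delta(1),\dots,\Delta(n))$, let $\Delta(G)=\max\{\Delta(i)\mid i=1,\dots,n\}$, and let $D_\Delta=\Delta^{-1/2}D\Delta^{-1/2}$. Then for all $i,j\in V$, $$\ell^D(i,j)\le d^{D_\Delta}(i,j)\le \Delta(G)\,d^D(i,j).$$
   Context: For a self-adjoint $n\times n$ matrix $M$, the noncommutative distance is $d^M(i,j)=\sup\{|a(i)-a(j)| : a\in\mathbb{C}^n,\ \|[M,\pi(a)]\|\le 1\}\in[0,+\infty]$, where $\pi(a)=\mathrm{diag}(a(1),\dots,a(n))$ and $\|\cdot\|$ is the operator norm. The weight of an edge $\{i,j\}\in E$ is $w^D(i,j)=|D_{ij}|^{-1}\in(0,+\infty]$. The length of a path in $G$ is the sum of the weights of its edges, and $\ell^D(i,j)$ (the geodesic distance) is the infimum of the lengths of all paths in $G$ from $i$ to $j$. *)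

(* Defs.v *)
From HB Require Import structures.
From mathcomp Require Import all_boot all_order all_algebra.
From mathcomp Require Import complex.
From mathcomp Require Import all_classical reals constructive_ereal ereal.
Set Implicit Arguments. Unset Strict Implicit. Unset Printing Implicit Defensive.
Import Order.TTheory GRing.Theory Num.Theory.
Import ComplexField.

Local Open Scope ring_scope.

Section Defs.
Variable R : realType.
Local Notation C := R[i].

Definition cmod (z : C) : R := Normc.normc z.

Definition vnorm n (x : 'cV[C]_n) : R := Num.sqrt (\sum_i cmod (x i 0) ^+ 2).

Definition opnorm n (A : 'M[C]_n) : \bar R :=
  ereal_sup [set (vnorm (A *m x))%:E | x in [set x : 'cV[C]_n | vnorm x <= 1]].

Definition piv n (a : 'rV[C]_n) : 'M[C]_n := diag_mx a.

Definition commut n (M B : 'M[C]_n) : 'M[C]_n := M *m B - B *m M.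

Definition ncdist n (M : 'M[C]_n) (i j : 'I_n) : \bar R :=
  ereal_sup [set (cmod (a 0 i - a 0 j))%:E |
             a in [set a : 'rV[C]_n | (opnorm (commut M (piv a)) <= 1%:E)%E]].

Definition selfadjoint n (M : 'M[C]_n) : Prop := forall i j, M j i = (M i j)^*.

Definition simple_graph n (E : rel 'I_n) : Prop :=
  (forall i j, E i j = E j i) /\ (forall i, ~~ E i i).

Definition connected_graph n (E : rel 'I_n) : Prop := forall i j, connect E i j.

Definition compatible n (E : rel 'I_n) (D : 'M[C]_n) : Prop :=
  forall i j, i != j -> ~~ E i j -> D i j = 0 /\ D j i = 0.

Definition degree n (E : rel 'I_n) (v : 'I_n) : nat := #|[set w | E v w]|.

Definition maxdeg n (E : rel 'I_n) : nat := \max_(i < n) degree E i.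

Definition deg_invsqrt n (E : rel 'I_n) : 'M[C]_n :=
  diag_mx (\row_i (((Num.sqrt ((degree E i)%:R : R))^-1)%:C)%C).

Definition DDelta n (E : rel 'I_n) (D : 'M[C]_n) : 'M[C]_n :=
  deg_invsqrt E *m D *m deg_invsqrt E.

(* weight of an edge: |D_ij|^{-1} in (0,+oo], with 1/0 = +oo *)
Definition weight n (D : 'M[C]_n) (i j : 'I_n) : \bar R :=
  if D i j == 0 then +oo%E else ((cmod (D i j))^-1)%:E.

(* length of the path i = x_0, x_1, ..., x_k (x_1..x_k given by p) *)
Definition path_length n (D : 'M[C]_n) (i : 'I_n) (p : seq 'I_n) : \bar R :=
  (\sum_(e <- zip (i :: p) p) weight D e.1 e.2)%E.

Definition geodist n (E : rel 'I_n) (D : 'M[C]_n) (i j : 'I_n) : \bar R :=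
  ereal_inf [set path_length D i p |
             p in [set p : seq 'I_n | path E i p /\ last i p = j]].

End Defs.

(* Main.v *)
Require Import Defs.
From HB Require Import structures.
From mathcomp Require Import all_boot all_order all_algebra.
From mathcomp Require Import complex.
From mathcomp Require Import all_classical reals constructive_ereal ereal.
From mathcomp Require Import ring lra.
Import Order.TTheory GRing.Theory Num.Theory.
Import ComplexField.
Local Open Scope ring_scope.

Section H.
Variable R : realType.
Local Notation C := R[i].

Lemma cmod_ge0 (z : C) : 0 <= cmod z.
Proof. by case: z => a b; rewrite /cmod /= sqrtr_ge0. Qed.

Lemma cmodM (x y : C) : cmod (x * y) = cmod x * cmod y.
Proof. exact: Normc.normcM. Qed.

Lemma cmodD (x y : C) : cmod (x + y) <= cmod x + cmod y.
Proof. exact: le_normcD. Qed.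

Lemma cmodN (x : C) : cmod (- x) = cmod x.
Proof. exact: normcN. Qed.

Lemma cmod0 : cmod (0 : C) = 0.
Proof. exact: Normc.normc0. Qed.

Lemma cmodR (r : R) : cmod (r%:C)%C = `|r|.
Proof. by rewrite /cmod /= expr0n /= addr0 sqrtr_sqr. Qed.

Lemma cmodJ (z : C) : cmod z^* = cmod z.
Proof. by case: z => a b; rewrite /cmod /= sqrrN. Qed.

Lemma cmodV (z : C) : cmod z^-1 = (cmod z)^-1.
Proof. exact: Normc.normcV. Qed.

Lemma cmod_eq0 (z : C) : (cmod z == 0) = (z == 0).
Proof.
apply/eqP/eqP; first exact: Normc.eq0_normc.
by move=> ->; rewrite cmod0.
Qed.

Lemma cmod_sum (I : finType) (F : I -> C) : cmod (\sum_i F i) <= \sum_i cmod (F i).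
Proof.
apply: (big_ind2 (fun x y => cmod x <= y)); first by rewrite cmod0.
  move=> x1 x2 y1 y2 h1 h2; apply: le_trans (cmodD _ _) _; exact: lerD.
by [].
Qed.

Lemma cs_ineq (I : finType) (w y : I -> R) : (forall a, 0 <= w a) ->
  (\sum_a w a * y a) ^+ 2 <= (\sum_a w a) * (\sum_a w a * y a ^+ 2).
Proof.
move=> w0.
have H : 0 <= \sum_a \sum_b w a * w b * (y a - y b) ^+ 2.
  apply: sumr_ge0 => a _; apply: sumr_ge0 => b _.
  by apply: mulr_ge0; [apply: mulr_ge0|apply: sqr_ge0].
have E1 : \sum_a \sum_b w a * w b * (y a - y b) ^+ 2 =
   \sum_a \sum_b (w a * (w b * y b ^+ 2)) + \sum_a \sum_b (w b * (w a * y a ^+ 2))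
   - 2%:R * \sum_a \sum_b ((w a * y a) * (w b * y b)).
  rewrite mulr_sumr -!big_split -sumrB /=; apply: eq_bigr => a _.
  rewrite mulr_sumr -!big_split -sumrB /=; apply: eq_bigr => b _; ring.
have E2 : \sum_a \sum_b (w a * (w b * y b ^+ 2)) = (\sum_a w a) * (\sum_a w a * y a ^+ 2).
  by rewrite mulr_suml; apply: eq_bigr => a _; rewrite mulr_sumr.
have E3 : \sum_a \sum_b (w b * (w a * y a ^+ 2)) = (\sum_a w a) * (\sum_a w a * y a ^+ 2).
  by rewrite exchange_big /= -E2.
have E4 : \sum_a \sum_b ((w a * y a) * (w b * y b)) = (\sum_a w a * y a) ^+ 2.
  by rewrite expr2 mulr_suml; apply: eq_bigr => a _; rewrite mulr_sumr.
move: H; rewrite E1 E2 E3 E4; lra.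
Qed.

Lemma normlemma n (w : 'I_n -> 'I_n -> R) (c : 'I_n -> R) (M : 'M[C]_n) (x : 'cV[C]_n) :
 (forall k m, 0 <= w k m) -> (forall k m, w k m = w m k) ->
 (forall k, 0 <= c k) -> (forall k, c k ^+ 2 * \sum_m w k m = 1) ->
 (forall k m, cmod (M k m) <= w k m * c k * c m) ->
 \sum_k cmod ((M *m x) k 0) ^+ 2 <= \sum_k cmod (x k 0) ^+ 2.
Proof.
move=> w0 wsym c0 cw Mb.
have step k : cmod ((M *m x) k 0) ^+ 2 <= \sum_m w k m * (c m * cmod (x m 0)) ^+ 2.
  rewrite mxE.
  have h1 : cmod (\sum_m M k m * x m 0) <= c k * \sum_m w k m * (c m * cmod (x m 0)).
    apply: le_trans (cmod_sum _ (fun m => M k m * x m 0)) _.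
    rewrite mulr_sumr; apply: ler_sum => m _; rewrite cmodM.
    have := Mb k m; have := cmod_ge0 (x m 0); have := cmod_ge0 (M k m).
    have := c0 k; have := c0 m; have := w0 k m; move: (cmod (M k m)) (cmod (x m 0)) => a b.
    move=> *; nra.
  have h2 := cs_ineq _ (w k) (fun m => c m * cmod (x m 0)) (w0 k).
  have h3 := cw k.
  have h4 : 0 <= \sum_m w k m * (c m * cmod (x m 0)).
    by apply: sumr_ge0 => m _; apply: mulr_ge0 => //; apply: mulr_ge0 => //; apply: cmod_ge0.
  have h5 := cmod_ge0 (\sum_m M k m * x m 0).
  have h6 := c0 k.
  move: h1 h2 h3 h4 h5 h6.
  move: (cmod (\sum_m M k m * x m 0)) (\sum_m w k m * (c m * cmod (x m 0))) (\sum_m w k m) => A S W.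
  move: (\sum_m w k m * (c m * cmod (x m 0)) ^+ 2) => T.
  move=> *; nra.
apply: le_trans (ler_sum _ (fun k _ => step k)) _.
rewrite exchange_big /=; apply: ler_sum => m _.
rewrite -mulr_suml.
under eq_bigr do rewrite wsym.
have := cw m; move: (\sum_i w m i) => W h.
rewrite exprMn mulrA mulrA [W * _]mulrC h mul1r. by rewrite expr2.
Qed.


Lemma commutE n (M : 'M[C]_n) (a : 'rV[C]_n) k m :
  commut M (piv a) k m = M k m * (a 0 m - a 0 k).
Proof. by rewrite /commut /piv mul_mx_diag mul_diag_mx !mxE; ring. Qed.

Definition csq n (E : rel 'I_n) (k : 'I_n) : R := (Num.sqrt ((degree E k)%:R : R))^-1.
Arguments csq {n}.

Lemma DDeltaE n (E : rel 'I_n) (D : 'M[C]_n) k m :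
  DDelta E D k m = ((csq E k)%:C)%C * D k m * ((csq E m)%:C)%C.
Proof. by rewrite /DDelta /deg_invsqrt mul_mx_diag mul_diag_mx !mxE. Qed.

Lemma degree_sum n (E : rel 'I_n) v : ((degree E v)%:R : R) = \sum_m ((E v m)%:R : R).
Proof.
have -> : \sum_m ((E v m)%:R : R) = \sum_(m in [set w | E v w]) (1:R).
  by rewrite [RHS]big_mkcond; apply: eq_bigr => m _; rewrite inE; case: (E v m).
by rewrite sumr_const.
Qed.

Lemma degree_pos n (E : rel 'I_n) : (2 <= n)%N -> connected_graph E ->
  forall v, (0 < degree E v)%N.
Proof.
move=> n2 conn v.
have [w wv] : exists w : 'I_n, w != v.
  have h0 : (0 < n)%N by apply: leq_trans n2.
  have h1 : (1 < n)%N by [].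
  case: (eqVneq v (Ordinal h0)) => [->|hv]; last by exists (Ordinal h0); rewrite eq_sym.
  by exists (Ordinal h1); apply/eqP => /(congr1 val).
have := conn v w => /connectP [p hp hl].
case: p hp hl => [|x p] /=; first by move=> _ hw; rewrite hw eqxx in wv.
move=> /andP [hx _] _.
rewrite /degree card_gt0; apply/set0Pn; exists x; by rewrite inE.
Qed.

Lemma csq_ge0 n (E : rel 'I_n) k : 0 <= csq E k.
Proof. by rewrite /csq invr_ge0 sqrtr_ge0. Qed.

Lemma csq_cw n (E : rel 'I_n) k : (0 < degree E k)%N ->
  csq E k ^+ 2 * \sum_m ((E k m)%:R : R) = 1.
Proof.
move=> hk; rewrite -degree_sum /csq exprVn sqr_sqrtr ?ler0n // mulVf //.
by rewrite pnatr_eq0 -lt0n.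
Qed.

Lemma vnorm_le n (x y : 'cV[C]_n) :
  \sum_k cmod (y k 0) ^+ 2 <= \sum_k cmod (x k 0) ^+ 2 -> vnorm y <= vnorm x.
Proof.
move=> h; rewrite /vnorm ler_sqrt //.
by apply: sumr_ge0 => k _; apply: sqr_ge0.
Qed.

Lemma opnorm_le1 n (A : 'M[C]_n) :
  (forall x, vnorm x <= 1 -> vnorm (A *m x) <= 1) -> (opnorm A <= 1%:E)%E.
Proof.
move=> h; apply: ge_ereal_sup => _ [x hx <-]; rewrite lee_fin; exact: h.
Qed.

Lemma opnorm_use n (A : 'M[C]_n) x : (opnorm A <= 1%:E)%E -> vnorm x <= 1 -> vnorm (A *m x) <= 1.
Proof.
move=> h hx; rewrite -lee_fin; apply: le_trans h.
by apply: ereal_sup_ubound; exists x.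
Qed.

Lemma ncdist_lb n (M : 'M[C]_n) (a : 'rV[C]_n) i j :
  (opnorm (commut M (piv a)) <= 1%:E)%E -> ((cmod (a 0 i - a 0 j))%:E <= ncdist M i j)%E.
Proof. by move=> h; apply: ereal_sup_ubound; exists a. Qed.


Lemma weight_ge0 n (D : 'M[C]_n) i j : (0 <= weight D i j)%E.
Proof.
rewrite /weight; case: (D i j == 0) => //.
by rewrite lee_fin invr_ge0 cmod_ge0.
Qed.

Lemma path_length_cons n (D : 'M[C]_n) i x p :
  path_length D i (x :: p) = (weight D i x + path_length D x p)%E.
Proof. by rewrite /path_length /= big_cons. Qed.

Lemma path_length_rcons n (D : 'M[C]_n) i p m :
  path_length D i (rcons p m) = (path_length D i p + weight D (last i p) m)%E.
Proof.
elim: p i => [|x p IH] i.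
  by rewrite /path_length /= big_cons !big_nil adde0 add0e.
by rewrite rcons_cons path_length_cons IH path_length_cons addeA.
Qed.

Lemma path_length_ge0 n (D : 'M[C]_n) i p : (0 <= path_length D i p)%E.
Proof. by apply: sume_ge0 => e _; apply: weight_ge0. Qed.

Lemma geodist_ge0 n (E : rel 'I_n) (D : 'M[C]_n) i j : (0 <= geodist E D i j)%E.
Proof.
apply: le_ereal_inf_tmp => _ [p _ <-]; exact: path_length_ge0.
Qed.

Lemma geodist_ii n (E : rel 'I_n) (D : 'M[C]_n) i : geodist E D i i = 0%E.
Proof.
apply: le_anti; rewrite geodist_ge0 andbT.
apply: ereal_inf_lbound; exists [::] => //.
by rewrite /path_length /= big_nil.
Qed.

Lemma geodist_tri n (E : rel 'I_n) (D : 'M[C]_n) i k m :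
  E k m -> D k m != 0 ->
  (geodist E D i m <= geodist E D i k + ((cmod (D k m))^-1)%:E)%E.
Proof.
move=> Ekm Dkm.
rewrite -leeBlDr //.
apply: le_ereal_inf_tmp => _ [p [hp hl] <-].
rewrite leeBlDr //.
apply: ereal_inf_lbound; exists (rcons p m).
  by split; [rewrite rcons_path hp hl | rewrite last_rcons].
by rewrite path_length_rcons hl /weight (negbTE Dkm).
Qed.

Definition capv (N : R) (x : \bar R) : R := fine (Order.min N%:E x).

Lemma capv_cases (N : R) (x : \bar R) : (0 <= x)%E ->
  (exists2 r, 0 <= r & x = r%:E /\ capv N x = Num.min N r) \/ (x = +oo%E /\ capv N x = N).
Proof.
case: x => [r| |] hx.
- by left; exists r => //; split => //; rewrite /capv -EFin_min.
- by right; split => //; rewrite /capv min_l ?leey.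
- by [].
Qed.

Lemma capv_tri (N : R) (x y : \bar R) (w : R) : (0 <= N) -> (0 <= x)%E -> (0 <= y)%E -> 0 <= w ->
  (y <= x + w%:E)%E -> capv N y <= capv N x + w.
Proof.
move=> N0 hx hy w0 h.
case: (capv_cases N x hx) => [[r r0 [xr ->]]|[xo ->]];
case: (capv_cases N y hy) => [[s s0 [ys ->]]|[yo ->]].
- move: h; rewrite xr ys -EFinD lee_fin => h.
  rewrite !minEle; case: ifP; case: ifP => ? ?; lra.
- by move: h; rewrite xr yo.
- rewrite minEle; case: ifP => ?; lra.
- lra.
Qed.

Lemma capv_range (N : R) (x : \bar R) : 0 <= N -> (0 <= x)%E -> 0 <= capv N x <= N.
Proof.
move=> N0 hx; case: (capv_cases N x hx) => [[r r0 [xr ->]]|[xo ->]].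
- rewrite minEle; case: ifP => ?; apply/andP; split; lra.
- by rewrite lexx N0.
Qed.


Lemma part1_core n (E : rel 'I_n) (D : 'M[C]_n) i j (N : R) :
  simple_graph E -> (forall v, (0 < degree E v)%N) -> selfadjoint D -> compatible E D ->
  0 <= N -> (N%:E <= geodist E D i j)%E -> (N%:E <= ncdist (DDelta E D) i j)%E.
Proof.
move=> [Esym Eirr] dpos sa comp N0 hN.
pose L := fun k => geodist E D i k.
pose a : 'rV[C]_n := \row_k ((capv N (L k))%:C)%C.
have aE k : a 0 k = ((capv N (L k))%:C)%C by rewrite mxE.
have tri k m : E k m -> D k m != 0 -> capv N (L m) <= capv N (L k) + (cmod (D k m))^-1.
  move=> Ekm Dkm; apply: capv_tri => //; try exact: geodist_ge0.
  - by rewrite invr_ge0 cmod_ge0.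
  - exact: geodist_tri.
have entry k m : cmod (D k m * (a 0 m - a 0 k)) <= (E k m)%:R.
  case: (eqVneq k m) => [<-|kneq]; first by rewrite subrr mulr0 cmod0 ler0n.
  case Ekm: (E k m); last first.
    by have [-> _] := comp k m kneq (negbT Ekm); rewrite mul0r cmod0.
  case: (eqVneq (D k m) 0) => [->|Dkm]; first by rewrite mul0r cmod0.
  have Emk : E m k by rewrite Esym.
  have Dmk : D m k != 0 by rewrite sa conjc_eq0.
  have h1 := tri k m Ekm Dkm.
  have h2 := tri m k Emk Dmk.
  rewrite sa cmodJ in h2.
  rewrite cmodM !aE -rmorphB cmodR.
  have cD : 0 < cmod (D k m) by rewrite lt_def cmod_eq0 Dkm cmod_ge0.
  have h : `|capv N (L m) - capv N (L k)| <= (cmod (D k m))^-1.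
    by rewrite ler_norml; apply/andP; split; lra.
  apply: le_trans (ler_wpM2l (cmod_ge0 _) h) _.
  by rewrite mulfV ?lt0r_neq0 // mulr1n.
pose M := commut (DDelta E D) (piv a).
have Mb k m : cmod (M k m) <= (E k m)%:R * csq E k * csq E m.
  rewrite /M commutE DDeltaE.
  have -> : ((csq E k)%:C)%C * D k m * ((csq E m)%:C)%C * (a 0 m - a 0 k) =
            (((csq E k)%:C)%C * ((csq E m)%:C)%C) * (D k m * (a 0 m - a 0 k)) by ring.
  rewrite cmodM; have := entry k m; move: (cmod (D k m * _)) => e he.
  rewrite cmodM !cmodR !ger0_norm ?csq_ge0 //.
  have -> : (E k m)%:R * csq E k * csq E m = csq E k * csq E m * (E k m)%:R by ring.
  by apply: ler_wpM2l => //; apply: mulr_ge0; apply: csq_ge0.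
have op : (opnorm M <= 1%:E)%E.
  apply: opnorm_le1 => x hx; apply: le_trans hx; apply: vnorm_le.
  apply: (normlemma _ (fun k m => (E k m)%:R) (csq E)) => //.
  - by move=> k m; rewrite Esym.
  - by move=> k; apply: csq_ge0.
  - by move=> k; apply: csq_cw.
have := ncdist_lb _ _ _ i j op.
have -> : cmod (a 0 i - a 0 j) = N; last by [].
rewrite !aE -rmorphB cmodR.
have -> : capv N (L i) = 0.
  by rewrite /L geodist_ii /capv -EFin_min /= minEle; case: ifP => ?; lra.
have -> : capv N (L j) = N.
  have hj : (0 <= L j)%E by apply: geodist_ge0.
  case: (capv_cases N (L j) hj) => [[r r0 [xr ->]]|[xo ->]] //.
  move: hN; rewrite /L in xr; rewrite xr lee_fin => hN.
  by rewrite minEle hN.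
by rewrite sub0r normrN ger0_norm.
Qed.


Lemma scal_le (q c : R) : 0 <= q <= 1 -> 0 <= c -> (`|q| * c) ^+ 2 <= c ^+ 2.
Proof.
move=> /andP [q0 q1] c0; rewrite ger0_norm //.
rewrite exprMn; have : q ^+ 2 <= 1 by rewrite expr_le1.
have := sqr_ge0 c; move: (c ^+ 2) => cc; nra.
Qed.

Lemma part2_core n (E : rel 'I_n) (D : 'M[C]_n) (a : 'rV[C]_n) i j :
  (2 <= n)%N -> (forall v, (0 < degree E v)%N) ->
  (opnorm (commut (DDelta E D) (piv a)) <= 1%:E)%E ->
  ((cmod (a 0 i - a 0 j))%:E <= (maxdeg E)%:R%:E * ncdist D i j)%E.
Proof.
move=> n2 dpos hop.
pose K : R := (maxdeg E)%:R.
have h0 : (0 < n)%N by apply: leq_trans n2.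
have Kpos : 0 < K.
  rewrite /K ltr0n; apply: leq_trans (dpos (Ordinal h0)) _.
  exact: (leq_bigmax (F := degree E) (Ordinal h0)).
have degK m : ((degree E m)%:R : R) <= K.
  by rewrite /K ler_nat; exact: (leq_bigmax (F := degree E) m).
pose sK := Num.sqrt K.
have sKpos : 0 < sK by rewrite sqrtr_gt0.
pose s := fun k : 'I_n => Num.sqrt ((degree E k)%:R : R).
have spos k : 0 < s k by rewrite sqrtr_gt0 ltr0n.
have q01 k : 0 <= s k / sK <= 1.
  apply/andP; split; first by rewrite divr_ge0 // ltW.
  by rewrite ler_pdivrMr // mul1r ler_sqrt ?(ltW Kpos).
pose b : 'rV[C]_n := \row_k (a 0 k / (K%:C)%C).
have opb : (opnorm (commut D (piv b)) <= 1%:E)%E.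
  apply: opnorm_le1 => x hx.
  pose z : 'cV[C]_n := \col_m (((s m / sK)%:C)%C * x m 0).
  have hz : vnorm z <= 1.
    apply: le_trans hx; apply: vnorm_le; apply: ler_sum => m _.
    by rewrite mxE cmodM cmodR; apply: scal_le => //; apply: cmod_ge0.
  have hMz := opnorm_use _ _ z hop hz.
  have key k : (commut D (piv b) *m x) k 0 =
      ((s k / sK)%:C)%C * ((commut (DDelta E D) (piv a)) *m z) k 0.
    rewrite !mxE mulr_sumr; apply: eq_bigr => m _.
    rewrite !commutE DDeltaE !mxE /csq.
    have sKC : (sK%:C)%C != 0 by rewrite fmorph_eq0 lt0r_neq0.
    have skC : ((s k)%:C)%C != 0 by rewrite fmorph_eq0 lt0r_neq0.
    have smC : ((s m)%:C)%C != 0 by rewrite fmorph_eq0 lt0r_neq0.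
    have KE : (K%:C)%C = ((sK%:C)%C) ^+ 2 by rewrite -rmorphXn sqr_sqrtr ?(ltW Kpos).
    rewrite KE !rmorphM !fmorphV /=.
    rewrite -/(s k) -/(s m).
    by field; rewrite sKC skC smC.
  apply: le_trans hMz; apply: vnorm_le; apply: ler_sum => k _.
  by rewrite key cmodM cmodR; apply: scal_le => //; apply: cmod_ge0.
have := ncdist_lb _ _ _ i j opb.
have -> : cmod (a 0 i - a 0 j) = K * cmod (b 0 i - b 0 j).
  rewrite !mxE -mulrBl cmodM cmodV cmodR ger0_norm ?(ltW Kpos) //.
  by rewrite mulrC -mulrA mulVf ?lt0r_neq0 // mulr1.
rewrite EFinM => h.
by apply: lee_wpmul2l => //; rewrite lee_fin ltW.
Qed.

End H.

Theorem mainTheorem1 (R : realType) (n : nat) (E : rel 'I_n) (D : 'M[R[i]]_n) :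
  (2 <= n)%N ->
  simple_graph E ->
  connected_graph E ->
  selfadjoint D ->
  compatible E D ->
  forall i j : 'I_n,
    (geodist E D i j <= ncdist (DDelta E D) i j)%E /\
    (ncdist (DDelta E D) i j <= (maxdeg E)%:R%:E * ncdist D i j)%E.
Proof.
move=> n2 sg conn sa comp i j.
have dpos := degree_pos _ E n2 conn.
split.
- have hL := geodist_ge0 _ _ E D i j.
  case hg: (geodist E D i j) hL => [r| |] hL //.
  + apply: (part1_core R n E D i j r sg dpos sa comp).
      by move: hL; rewrite lee_fin.
    by rewrite hg.
  + case hd: (ncdist (DDelta E D) i j) => [r'| |] //.
    * have := part1_core R n E D i j (`|r'| + 1) sg dpos sa comp.
      rewrite hg hd leey lee_fin => /(_ (addr_ge0 (normr_ge0 _) ler01) isT).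
      move=> h; exfalso; have := ler_norm r'; lra.
    * have := part1_core R n E D i j 0 sg dpos sa comp.
      rewrite hg hd leey lexx => /(_ isT isT).
      by rewrite leeNy_eq.
- apply: ge_ereal_sup => _ [a ha <-].
  exact: part2_core.
Qed.
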